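(* Let $(x_K)_{K\ge1}\subseteq\{0,1\}^{\mathbb Z}$ be a coordinatewise non-increasing sequence with coordinatewise limit $x_\infty$, and suppose $(x_K)$ is good: there is an increasing sequence $(N_i)$ such that for every $K\in\mathbb N\cup\{\infty\}$, $x_K$ is quasi-generic along $(N_i)$ for some measure $\nu_K$ (i.e. $\frac1{N_i}\sum_{n\le N_i}\delta_{\sigma^nx_K}\to\nu_K$ weakly), and $\nu_K(1)\to\nu_\infty(1)$ as $K\to\infty$. Then $\nu_K\to\nu_\infty$ weakly.
   Context: $\sigma$ is the left shift on $\{0,1\}^{\mathbb Z}$; for a measure $\mu$ on $\{0,1\}^{\mathbb Z}$, $\mu(1)=\mu(\{x:x_0=1\})$. *)

(* Defs.v *)
From HB Require Import structures.
From mathcomp Require Import all_boot all_order all_algebra.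
From mathcomp Require Import all_classical all_reals all_analysis.
Import Order.TTheory GRing.Theory Num.Theory.
Import numFieldNormedType.Exports.
Set Implicit Arguments.
Unset Strict Implicit.
Unset Printing Implicit Defensive.
Local Open Scope classical_set_scope.
Local Open Scope ring_scope.

(** The full shift {0,1}^Z, with 1 encoded as [true], with the product
    (pointwise-convergence) topology of discrete copies of [bool]. *)
Definition Omega : topologicalType := {ptws int -> bool}.

Definition BOmega := g_sigma_algebraType (@open Omega).

Definition shift (x : Omega) : Omega := fun n : int => x (n + 1).

(** The cylinder [x_0 = 1]; mu(1) := mu [set x | x_0 = 1]. *)
Definition cyl1 : set BOmega := [set x : BOmega | (x : int -> bool) 0 = true].

Definition integ {R : realType} (mu : probability BOmega R) (f : Omega -> R)
  : \bar R := (\int[mu]_(x in [set: BOmega]) (f x)%:E)%E.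

Definition quasi_generic {R : realType} (N : nat -> nat) (x : Omega)
  (nu : probability BOmega R) : Prop :=
  forall f : Omega -> R, continuous f ->
    (fun i => ((N i)%:R^-1 * \sum_(1 <= n < (N i).+1) f (iter n shift x))%:E)
      @ \oo --> integ nu f.

Definition weak_cvg {R : realType} (nu : nat -> probability BOmega R)
  (nu_inf : probability BOmega R) : Prop :=
  forall f : Omega -> R, continuous f ->
    (fun K => integ (nu K) f) @ \oo --> integ nu_inf f.

(* Main.v *)
Require Import Defs.
From HB Require Import structures.
From mathcomp Require Import all_boot all_order all_algebra.
From mathcomp Require Import all_classical all_reals all_analysis.
From mathcomp Require Import ring lra zify.
From Stdlib Require Import Lia.
Import Order.TTheory GRing.Theory Num.Theory.
Import numFieldNormedType.Exports.
Local Open Scope classical_set_scope.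
Local Open Scope ring_scope.

Lemma Omega_compact : compact [set: Omega].
Proof.
have := @tychonoff int (fun _ => bool) (fun _ => setT) (fun _ => bool_compact).
by rewrite /Omega; congr compact; apply/seteqP; split.
Qed.

Lemma Omega_nbhs_coord (z : Omega) (j : int) :
  nbhs z [set w : Omega | (w : int -> bool) j = (z : int -> bool) j].
Proof.
have := @proj_continuous int (fun _ => bool) j z.
move=> /(_ [set (z : int -> bool) j]) H.
apply: H. by rewrite nbhs_principalE.
Qed.

Lemma unif_cont (R : realType) (f : Omega -> R) : continuous f ->
  forall d : R, 0 < d -> exists M : nat, forall x y : Omega,
    (forall j : int, `|j| <= M%:Z -> (x : int -> bool) j = (y : int -> bool) j) ->
    `|f x - f y| <= d.
Proof.
move=> fc d d0; apply/not_existsP => Hn.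
have : forall M : nat, exists p : Omega * Omega,
   (forall j : int, `|j| <= M%:Z -> (p.1 : int -> bool) j = (p.2 : int -> bool) j)
   /\ d < `|f p.1 - f p.2|.
  move=> M; have := Hn M => /existsNP [x] /existsNP [y] /not_implyP [H1 H2].
  by exists (x, y); split => //; rewrite ltNge; apply/negP.
move=> /choice [p Hp].
have cpt := compact_setX Omega_compact Omega_compact.
have PF : ProperFilter (p @ \oo) by apply: fmap_proper_filter.
have pT : (p @ \oo) ([set: Omega] `*` [set: Omega]) by rewrite setXTT; apply: filterT.
have [z [_ cz]] := cpt (p @ \oo) PF pT.
have hc : forall B, nbhs z B -> forall N, exists M, (N <= M)%N /\ B (p M).
  move=> B nB N.
  have FA : (p @ \oo) (p @` [set M | (N <= M)%N]) by exists N => // M NM; exists M.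
  have [q [[M /= NM <-] Bq]] := cz _ _ FA nB.
  by exists M.
have Hz : z.1 = z.2.
  apply: functional_extensionality_dep => j; apply/eqP; apply/negPn/negP => Hj.
  have nB : nbhs z (fun q : Omega * Omega => (q.1 : int -> bool) j = (z.1 : int -> bool) j /\ (q.2 : int -> bool) j = (z.2 : int -> bool) j).
    exists ([set w : Omega | (w : int -> bool) j = (z.1 : int -> bool) j],
            [set w : Omega | (w : int -> bool) j = (z.2 : int -> bool) j]).
      by split; apply: Omega_nbhs_coord.
    by case=> a b [/= -> ->].
  have [M [jM [E1 E2]]] := hc _ nB `|j|%N.
  move: Hj; rewrite -E1 -E2 (proj1 (Hp M)) ?eqxx //.
have nB : nbhs z (fun q : Omega * Omega => `|f z.1 - f q.1| < d / 2 /\ `|f z.2 - f q.2| < d / 2).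
  exists ([set w : Omega | `|f z.1 - f w| < d / 2],
          [set w : Omega | `|f z.2 - f w| < d / 2]).
    have d2 : 0 < d / 2 by rewrite divr_gt0.
    split.
      by have /cvgrPdist_lt := fc z.1; apply.
    by have /cvgrPdist_lt := fc z.2; apply.
  by case=> a b [/= Ha Hb].
have [M [_ [E1 E2]]] := hc _ nB 0%N.
have := proj2 (Hp M); rewrite ltNge => /negP; apply.
rewrite -Hz in E2.
have -> : f (p M).1 - f (p M).2 = (f z.1 - f (p M).2) - (f z.1 - f (p M).1) by ring.
apply: (le_trans (ler_normB _ _)).
by rewrite [d]splitr lerD // ltW.
Qed.

Lemma cont_bounded (R : realType) (f : Omega -> R) : continuous f ->
  exists C : R, 0 <= C /\ forall x, `|f x| <= C.
Proof.
move=> fc.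
have cI : compact (f @` [set: Omega]).
  apply: continuous_compact Omega_compact.
  by apply: continuous_subspaceT.
have [M [Mr HM]] := compact_bounded cI.
exists (`|M| + 1); split; first by rewrite addr_ge0.
move=> x; apply: (HM (`|M| + 1)); last by exists x.
by rewrite (le_lt_trans (real_ler_norm Mr)) // ltrDl.
Qed.

Lemma coord_cont (R : realType) (j : int) :
  continuous (fun x : Omega => (((x : int -> bool) j)%:R : R)).
Proof.
move=> z A nA; have /= := Omega_nbhs_coord z j; apply: filterS => w /= Hw.
by move: Hw => /= ->; apply: nbhs_singleton.
Qed.

Lemma iter_shift (n : nat) (z : Omega) (m : int) :
  (@iter Omega n Defs.shift z : int -> bool) m = (z : int -> bool) (m + (n : int)).
Proof.
elim: n m => [|n IH] m /=; first by rewrite addr0.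
rewrite /Defs.shift IH -addrA; congr (z _); rewrite intS; ring.
Qed.

Lemma cyl1_open : @open Omega cyl1.
Proof.
rewrite openE => x Hx; rewrite /interior.
apply: filterS (Omega_nbhs_coord x 0) => w /= Hw; rewrite /cyl1 /=; move: Hw => /= ->; exact: Hx.
Qed.

Lemma cyl1_meas : measurable cyl1.
Proof. by apply: sub_sigma_algebra; exact: cyl1_open. Qed.

Lemma integ_coord (R : realType) (mu : probability BOmega R) :
  integ mu (fun x : Omega => (((x : int -> bool) 0)%:R : R)) = mu cyl1.
Proof.
rewrite /integ; transitivity (mu (cyl1 `&` setT)); last by rewrite setIT.
rewrite -integral_indic; last exact: cyl1_meas.
apply: eq_integral => x _; congr (_%:E).
rewrite indicE; congr (_%:R); congr nat_of_bool.
  apply/esym; case E: (x 0).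
    exact: (@mem_set _ cyl1 x E).
  by apply/negbTE/negP => /set_mem; rewrite /cyl1 /= E.
exact: measurableT.
Qed.
Section Comb.
Variable R : realType.

Lemma shift_sum_id (D : int -> R) (N : nat) (t : int) :
  \sum_(1 <= n < N.+1) D (n%:Z + (t + 1)) + D (1 + t) =
  \sum_(1 <= n < N.+1) D (n%:Z + t) + D (N.+1%:Z + t).
Proof.
have E1 : \sum_(1 <= n < N.+2) D (n%:Z + t) = D (1 + t) + \sum_(2 <= n < N.+2) D (n%:Z + t).
  by rewrite big_ltn.
have E2 : \sum_(1 <= n < N.+2) D (n%:Z + t) = \sum_(1 <= n < N.+1) D (n%:Z + t) + D (N.+1%:Z + t).
  by rewrite big_nat_recr.
have E3 : \sum_(2 <= n < N.+2) D (n%:Z + t) = \sum_(1 <= n < N.+1) D (n%:Z + (t + 1)).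
  rewrite big_add1; apply: eq_bigr => n _; congr D; rewrite intS; ring.
by rewrite -E3 addrC -E1 E2.
Qed.

Lemma shift_sum_le (D : int -> R) (N : nat) (m : nat) :
  (forall z, 0 <= D z <= 1) -> forall t : int, (`|t| <= m%:Z)%R ->
  \sum_(1 <= n < N.+1) D (n%:Z + t) <= \sum_(1 <= n < N.+1) D n%:Z + m%:R.
Proof.
move=> D01.
have up : forall t, \sum_(1 <= n < N.+1) D (n%:Z + (t + 1)) <= \sum_(1 <= n < N.+1) D (n%:Z + t) + 1.
  move=> t; have := shift_sum_id D N t; have := D01 (1 + t); have := D01 (N.+1%:Z + t).
  move=> /andP [h1 h2] /andP [h3 h4]; lra.
have down : forall t, \sum_(1 <= n < N.+1) D (n%:Z + t) <= \sum_(1 <= n < N.+1) D (n%:Z + (t + 1)) + 1.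
  move=> t; have := shift_sum_id D N t; have := D01 (1 + t); have := D01 (N.+1%:Z + t).
  move=> /andP [h1 h2] /andP [h3 h4]; lra.
elim: m => [|m IH] t ht.
  have -> : t = 0 by apply/eqP; rewrite -normr_le0.
  under eq_bigr do rewrite addr0; rewrite addr0; lra.
have [t0|t0|->] := ltgtP t 0.
- have ht' : `|t + 1| <= m%:Z by lia.
  have := IH _ ht'; have := down t; rewrite -natr1; lra.
- have ht' : `|t - 1| <= m%:Z by lia.
  have := IH _ ht'; have := up (t - 1); rewrite subrK -natr1; lra.
- under eq_bigr do rewrite addr0; rewrite -natr1.
  have : 0 <= m%:R :> R by [].
  lra.
Qed.

Lemma key_sum (F G : nat -> R) (D : int -> R) (d C : R) (M N : nat) :
  0 <= C -> (forall z, 0 <= D z <= 1) ->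
  (forall n, `|F n - G n| <= d + 2 * C * \sum_(k < (2*M).+1) D (n%:Z + (k%:Z - M%:Z))) ->
  \sum_(1 <= n < N.+1) `|F n - G n| <=
    N%:R * d + 2 * C * ((2*M).+1%:R * (\sum_(1 <= n < N.+1) D n%:Z + M%:R)).
Proof.
move=> C0 D01 H.
apply: le_trans (ler_sum _ (fun n _ => H n)) _.
rewrite big_split /= sumr_const_nat subn1 /= -mulr_sumr -[d *+ N]mulr_natl.
rewrite lerD2l ler_wpM2l ?mulr_ge0 //.
rewrite exchange_big /=.
have Hk : forall k : 'I_(2*M).+1, `|k%:Z - M%:Z| <= M%:Z by move=> k; move: (ltn_ord k); lia.
apply: le_trans (ler_sum _ (fun (k : 'I_(2*M).+1) _ => @shift_sum_le D N M D01 (k%:Z - M%:Z) (Hk k))) _.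
by rewrite sumr_const card_ord mulr_natl.
Qed.

End Comb.

Section Point.
Variable R : realType.

Definition Dz (xa xb : Omega) (m : int) : R :=
  (((xa : int -> bool) m)%:R - ((xb : int -> bool) m)%:R).

Lemma Dz01 (xa xb : Omega) : (forall m, (xb : int -> bool) m ==> (xa : int -> bool) m) ->
  forall z, 0 <= Dz xa xb z <= 1.
Proof.
move=> H z; rewrite /Dz; move: (H z).
by case: ((xa : int -> bool) z); case: ((xb : int -> bool) z) => //= _; rewrite ?subrr ?subr0 ?lexx ?ler01.
Qed.

Lemma point_bound (f : Omega -> R) (C d : R) (M : nat) (xa xb : Omega) :
  (forall w, `|f w| <= C) -> 0 <= d ->
  (forall x y : Omega, (forall j : int, `|j| <= M%:Z -> (x : int -> bool) j = (y : int -> bool) j) -> `|f x - f y| <= d) ->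
  (forall m, (xb : int -> bool) m ==> (xa : int -> bool) m) ->
  forall n : nat, `|f (@iter Omega n Defs.shift xa) - f (@iter Omega n Defs.shift xb)| <=
    d + 2 * C * \sum_(k < (2*M).+1) Dz xa xb (n%:Z + (k%:Z - M%:Z)).
Proof.
move=> fC d0 unif hab n.
have D01 : forall z, 0 <= (Dz xa xb z : R) <= 1 := Dz01 xa xb hab.
have C0 : 0 <= C by apply: le_trans (fC xa).
have S0 : 0 <= \sum_(k < (2*M).+1) Dz xa xb (n%:Z + (k%:Z - M%:Z)).
  by apply: sumr_ge0 => k _; case/andP: (D01 (n%:Z + (k%:Z - M%:Z))).
case: (boolP [forall k : 'I_(2*M).+1, (xa : int -> bool) (n%:Z + (k%:Z - M%:Z)) == (xb : int -> bool) (n%:Z + (k%:Z - M%:Z))]).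
- move/forallP => Hall.
  apply: le_trans (unif _ _ _) _; last by rewrite lerDl mulr_ge0 // mulr_ge0.
  move=> j hj; rewrite !iter_shift.
  have hk : (absz (j + M%:Z)%R < (2*M).+1)%N by lia.
  have := eqP (Hall (Ordinal hk)); rewrite /=.
  have -> : n%:Z + ((absz (j + M%:Z)%R)%:Z - M%:Z) = j + n%:Z by lia.
  done.
- rewrite negb_forall => /existsP [k hk].
  have Dk : Dz xa xb (n%:Z + (k%:Z - M%:Z)) = 1.
    rewrite /Dz; move: hk (hab (n%:Z + (k%:Z - M%:Z))).
    by case: (xa _); case: (xb _) => //= _ _; rewrite subr0.
  have S1 : 1 <= \sum_(k < (2*M).+1) Dz xa xb (n%:Z + (k%:Z - M%:Z)).
    rewrite (bigD1 k) //= Dk lerDl; apply: sumr_ge0 => i _.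
    by case/andP: (D01 (n%:Z + (i%:Z - M%:Z))).
  apply: le_trans (ler_normB _ _) _.
  have h1 := fC (@iter Omega n Defs.shift xa); have h2 := fC (@iter Omega n Defs.shift xb).
  have : 2 * C <= 2 * C * \sum_(k < (2*M).+1) Dz xa xb (n%:Z + (k%:Z - M%:Z)).
    by rewrite -{1}(mulr1 (2 * C)) ler_wpM2l // mulr_ge0.
  lra.
Qed.

End Point.

Section Ana.
Variable R : realType.

Lemma avg_bound (h : Omega -> R) (C : R) (z : Omega) (N : nat) :
  0 <= C -> (forall w, `|h w| <= C) ->
  `|N%:R^-1 * \sum_(1 <= n < N.+1) h (@iter Omega n Defs.shift z)| <= C.
Proof.
move=> C0 hC; case: N => [|N]; first by rewrite invr0 mul0r normr0.
rewrite normrM ger0_norm ?invr_ge0 //.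
have : `|\sum_(1 <= n < N.+2) h (@iter Omega n Defs.shift z)| <= N.+1%:R * C.
  apply: le_trans (ler_norm_sum _ _ _) _.
  apply: le_trans (ler_sum _ (fun n _ => hC _)) _.
  by rewrite sumr_const_nat subn1 /= mulr_natl.
move=> H; rewrite -(ler_pM2l (_ : 0 < N.+1%:R)) // mulrA mulfV ?mul1r //.
Qed.

Lemma fin_lim (a : nat -> R) (C : R) (l : \bar R) :
  (forall i, `|a i| <= C) -> (fun i => (a i)%:E) @ \oo --> l ->
  exists r : R, l = r%:E /\ a @ \oo --> r.
Proof.
move=> aC; case: l => [r H|H|H].
- by exists r; split => //; exact: (fine_cvg H).
- exfalso; move/cvgeyPge: H => /(_ (C + 1)) [K _ HK].
  have := HK K (leqnn K); rewrite lee_fin; have := aC K.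
  move/ler_normlP => [h1 h2]; lra.
- exfalso; move/cvgeNyPle: H => /(_ (- C - 1)) [K _ HK].
  have := HK K (leqnn K); rewrite lee_fin; have := aC K.
  move/ler_normlP => [h1 h2]; lra.
Qed.

Lemma invN_cvg0 (N : nat -> nat) : {homo N : i j / (i < j)%N} ->
  (fun i => (N i)%:R^-1 : R) @ \oo --> 0.
Proof.
move=> hN.
have Ni : forall i, (i <= N i)%N.
  elim=> [|i IH] //; apply: leq_ltn_trans IH (hN _ _ (ltnSn i)).
apply/cvgrPdist_le => e e0.
exists (Num.truncn e^-1).+1 => // i /= hi.
rewrite sub0r normrN ger0_norm ?invr_ge0 //.
have h1 : e^-1 < (N i)%:R.
  apply: lt_le_trans (truncnS_gt _) _.
  by rewrite ler_nat (leq_trans hi (Ni i)).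
have Np : 0 < (N i)%:R :> R by apply: lt_trans h1; rewrite invr_gt0.
by rewrite -[e]invrK lef_pV2 ?posrE ?invr_gt0 // ltW.
Qed.

End Ana.

Section Main.
Variable R : realType.

Lemma avg_diff (f : Omega -> R) (C d : R) (M Ni : nat) (xa xb : Omega) :
  (0 < Ni)%N -> (forall w, `|f w| <= C) -> 0 <= d ->
  (forall x y : Omega, (forall j : int, `|j| <= M%:Z -> (x : int -> bool) j = (y : int -> bool) j) -> `|f x - f y| <= d) ->
  (forall m, (xb : int -> bool) m ==> (xa : int -> bool) m) ->
  `|Ni%:R^-1 * \sum_(1 <= n < Ni.+1) f (@iter Omega n Defs.shift xa)
    - Ni%:R^-1 * \sum_(1 <= n < Ni.+1) f (@iter Omega n Defs.shift xb)| <=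
  d + 2 * C * (2*M).+1%:R *
   (Ni%:R^-1 * \sum_(1 <= n < Ni.+1) (((@iter Omega n Defs.shift xa : int -> bool) 0)%:R : R)
    - Ni%:R^-1 * \sum_(1 <= n < Ni.+1) (((@iter Omega n Defs.shift xb : int -> bool) 0)%:R : R))
  + 2 * C * (2*M).+1%:R * M%:R * Ni%:R^-1.
Proof.
move=> Ni0 fC d0 unif hab.
have C0 : 0 <= C by apply: le_trans (fC xa).
have D01 : forall z, 0 <= (Dz R xa xb z : R) <= 1 := Dz01 R xa xb hab.
have := key_sum R (fun n => f (@iter Omega n Defs.shift xa)) (fun n => f (@iter Omega n Defs.shift xb))
  (Dz R xa xb) d C M Ni C0 D01 (point_bound R f C d M xa xb fC d0 unif hab).
have E : \sum_(1 <= n < Ni.+1) (((@iter Omega n Defs.shift xa : int -> bool) 0)%:R : R)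
    - \sum_(1 <= n < Ni.+1) (((@iter Omega n Defs.shift xb : int -> bool) 0)%:R : R)
    = \sum_(1 <= n < Ni.+1) Dz R xa xb n%:Z.
  by rewrite -sumrB; apply: eq_bigr => n _; rewrite /Dz !iter_shift add0r.
rewrite -!mulrBr E -sumrB normrM ger0_norm ?invr_ge0 // => H.
have Np : 0 < Ni%:R :> R by rewrite ltr0n.
apply: le_trans (ler_wpM2l (_ : 0 <= Ni%:R^-1) (le_trans (ler_norm_sum _ _ _) H)) _.
  by rewrite invr_ge0 ltW.
rewrite le_eqVlt; apply/orP; left; apply/eqP.
field; by rewrite gt_eqF.
Qed.

End Main.

Theorem lemma3p8 (R : realType) (x : nat -> Omega) (x_inf : Omega)
  (N : nat -> nat) (nu : nat -> probability BOmega R)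
  (nu_inf : probability BOmega R) :
  (forall (K : nat) (n : int), (x K.+1 : int -> bool) n ==> (x K : int -> bool) n) ->
  (forall n : int, \forall K \near \oo, (x K : int -> bool) n = (x_inf : int -> bool) n) ->
  {homo N : i j / (i < j)%N} ->
  (forall K : nat, quasi_generic N (x K) (nu K)) ->
  quasi_generic N x_inf nu_inf ->
  (fun K => nu K cyl1) @ \oo --> nu_inf cyl1 ->
  weak_cvg nu nu_inf.
Proof.
move=> hmono hlim hN hK hinf hcyl f fc.
have mono : forall K K' n, (K <= K')%N -> (x K' : int -> bool) n ==> (x K : int -> bool) n.
  move=> K K' n /subnK <-; elim: (K' - K)%N => [|e IH] /=; first by rewrite add0n implybb.
  move: (hmono (e + K)%N n) IH; rewrite addSn.
  by case: ((x (e + K).+1 : int -> bool) n); case: ((x (e + K)%N : int -> bool) n); case: ((x K : int -> bool) n).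
have le_inf : forall K n, (x_inf : int -> bool) n ==> (x K : int -> bool) n.
  move=> K n; have [K0 _ HK0] := hlim n.
  rewrite -(HK0 (maxn K K0)); [exact: mono (leq_maxl _ _) | exact: leq_maxr].
pose g := fun w : Omega => (((w : int -> bool) 0)%:R : R).
have gc : continuous g := coord_cont R 0.
have gb : forall w, `|g w| <= 1 by move=> w; rewrite /g; case: ((w : int -> bool) 0); rewrite ?normr1 ?normr0.
pose av (z : Omega) (h : Omega -> R) (i : nat) :=
  (N i)%:R^-1 * \sum_(1 <= n < (N i).+1) h (@iter Omega n Defs.shift z).
have hp : forall K, exists r : R, nu K cyl1 = r%:E /\ av (x K) g @ \oo --> r.
  move=> K; have := hK K g gc; rewrite integ_coord => H.
  exact: (fin_lim R _ 1 _ (fun i => avg_bound R g 1 (x K) (N i) ler01 gb) H).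
move: hp => /choice [p hp].
have [pinf hpinf] : exists r : R, nu_inf cyl1 = r%:E /\ av x_inf g @ \oo --> r.
  have := hinf g gc; rewrite integ_coord => H.
  exact: (fin_lim R _ 1 _ (fun i => avg_bound R g 1 x_inf (N i) ler01 gb) H).
have pcv : p @ \oo --> pinf.
  have : (fun K => (p K)%:E) @ \oo --> pinf%:E.
    rewrite -(proj1 hpinf).
    have -> : (fun K => (p K)%:E) = (fun K => nu K cyl1) by apply: funext => K; rewrite (proj1 (hp K)).
    exact: hcyl.
  exact: fine_cvg.
have [C [C0 fC]] := cont_bounded R f fc.
have hl : forall K, exists r : R, integ (nu K) f = r%:E /\ av (x K) f @ \oo --> r.
  move=> K; have := hK K f fc => H.
  exact: (fin_lim R _ C _ (fun i => avg_bound R f C (x K) (N i) C0 fC) H).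
move: hl => /choice [l hl].
have [linf hlinf] : exists r : R, integ nu_inf f = r%:E /\ av x_inf f @ \oo --> r.
  have := hinf f fc => H.
  exact: (fin_lim R _ C _ (fun i => avg_bound R f C x_inf (N i) C0 fC) H).
have est : forall d : R, 0 < d -> exists A : R, 0 <= A /\
    forall K, `|l K - linf| <= d + A * (p K - pinf).
  move=> d d0; have [M HM] := unif_cont R f fc d d0.
  exists (2 * C * (2*M).+1%:R); split; first by rewrite !mulr_ge0.
  move=> K.
  set A := 2 * C * (2*M).+1%:R.
  have Ni : forall i, (i <= N i)%N.
    elim=> [|i IH] //; apply: leq_ltn_trans IH (hN _ _ (ltnSn i)).
  have cu : (fun i => `|av (x K) f i - av x_inf f i|) @ \oo --> `|l K - linf|.
    exact: (cvg_norm (cvgB (proj2 (hl K)) (proj2 hlinf))).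
  have cv : (fun i => d + A * (av (x K) g i - av x_inf g i) + A * M%:R * (N i)%:R^-1) @ \oo
      --> d + A * (p K - pinf) + A * M%:R * 0.
    apply: cvgD; first apply: cvgD; first exact: cvg_cst.
      by apply: cvgMl_tmp; apply: cvgB; [exact: (proj2 (hp K))|exact: (proj2 hpinf)].
    by apply: cvgMl_tmp; exact: invN_cvg0.
  rewrite mulr0 addr0 in cv.
  apply: (ler_cvg_to cu cv).
  exists 1%N => // i /= hi.
  have Ni0 : (0 < N i)%N by apply: leq_trans hi (Ni i).
  exact: (avg_diff R f C d M (N i) (x K) x_inf Ni0 fC (ltW d0) HM (le_inf K)).
have -> : (fun K => integ (nu K) f) = (fun K => (l K)%:E).
  by apply: funext => K; rewrite (proj1 (hl K)).
rewrite (proj1 hlinf).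
apply: cvg_EFin; first by apply: nearW.
apply/cvgrPdist_le => e e0.
have e2 : 0 < e / 2 by rewrite divr_gt0.
have [A [A0 HA]] := est _ e2.
have eA : 0 < e / 2 / (A + 1) by rewrite divr_gt0 // ltr_wpDl.
have /cvgrPdist_le /(_ _ eA) := pcv.
apply: filterS => K hpK /=.
rewrite distrC; apply: le_trans (HA K) _.
have : A * (p K - pinf) <= A * (e / 2 / (A + 1)).
  apply: ler_wpM2l => //; apply: le_trans (ler_norm _) _.
  by move: hpK; rewrite distrC.
have : A * (e / 2 / (A + 1)) <= e / 2.
  rewrite mulrA ler_pdivrMr ?ltr_wpDl // mulrC ler_wpM2l ?ltW //.
  lra.
lra.
Qed.
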